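(* Let $\alpha$ be a sequence such that $M(\alpha)$ is a bounded multiplicative Hankel operator on $\ell^2(\mathbb{N})$, and for $0<r<1$ let $\alpha_r=D_r\alpha$. Then $M(\alpha)$ is compact if and only if $\lim_{r\to1}\|M(\alpha_r)-M(\alpha)\|_{\mathcal{B}(\ell^2(\mathbb{N}))}=0$.
   Context: For a sequence $\alpha\colon\mathbb{N}\to\mathbb{C}$, $M(\alpha)$ is defined by $\langle M(\alpha)a,b\rangle_{\ell^2(\mathbb{N})}=\sum_{n,m}a(n)\overline{b(m)}\alpha(nm)$ for finitely supported $a,b$, and is bounded if it extends to a bounded operator on $\ell^2(\mathbb{N})$. Let $p_1<p_2<\dots$ be the primes. For a sequence $a$ and $0<r<1$, $D_ra(n)=r^{\sum_{j\ge1}j\kappa_j}a(n)$ where $n=\prod_{j\ge1}p_j^{\kappa_j}$. *)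

(* Defs.v *)
From mathcomp Require Import all_boot.
From Stdlib Require Import Reals.
From Coquelicot Require Import Coquelicot.

Set Implicit Arguments.
Unset Strict Implicit.

(* Sequences indexed by N = {1,2,...}; a sequence is a function nat -> C whose
   value at 0 is ignored. *)

(* index j of a prime p in the list p_1 = 2 < p_2 = 3 < ... :
   j = number of primes <= p. *)
Definition prime_index (p : nat) : nat := seq.count prime (seq.iota 0 p.+1).

Definition Dweight (n : nat) : nat :=
  \sum_(p <- primes n) (prime_index p * logn p n)%N.

Definition Dr (r : R) (a : nat -> C) : nat -> C :=
  fun n => Cmult (RtoC (pow r (Dweight n))) (a n).

(* Finitely supported sequences are represented by a bound N and a function a,
   only the values a 1, ..., a N being used (support in {1,...,N}). *)

Definition sqnorm (N : nat) (a : nat -> C) : R :=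
  sum_n_m (fun n => Rsqr (Cmod (a n))) 1%nat N.

Definition Mform (alpha : nat -> C) (N : nat) (a b : nat -> C) : C :=
  sum_n_m (fun n => sum_n_m (fun m =>
     Cmult (Cmult (a n) (Cconj (b m))) (alpha (n * m)%nat)) 1%nat N) 1%nat N.

Definition Mbounded (alpha : nat -> C) : Prop :=
  exists K : R, forall (N : nat) (a b : nat -> C),
    Cmod (Mform alpha N a b) <= K * sqrt (sqnorm N a) * sqrt (sqnorm N b).

(* ||M(alpha) - M(beta)||_{B(l^2)} <= eps, via the forms on the dense subspace
   of finitely supported sequences. *)
Definition Mdiff_norm_le (alpha beta : nat -> C) (eps : R) : Prop :=
  forall (N : nat) (a b : nat -> C),
    Cmod (Cminus (Mform alpha N a b) (Mform beta N a b))
      <= eps * sqrt (sqnorm N a) * sqrt (sqnorm N b).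

Definition Mapply (alpha : nat -> C) (N : nat) (a : nat -> C) (m : nat) : C :=
  sum_n_m (fun n => Cmult (alpha (n * m)%nat) (a n)) 1%nat N.

(* M(alpha) is compact: the image of the unit ball is relatively compact in
   l^2, i.e. (l^2 being complete) totally bounded: for every eps > 0 it is
   covered by finitely many eps-balls with centres y 0, ..., y (K-1) in l^2.
   The unit ball is replaced by its dense subset of finitely supported vectors
   (same closure of the image by continuity), and the l^2 distance is
   ||Ma - y_i||^2 = sup over L of the partial sums over {1..L}. *)
Definition Mcompact (alpha : nat -> C) : Prop :=
  forall eps : R, (0 < eps)%R ->
    exists (K : nat) (y : nat -> nat -> C),
      forall (N : nat) (a : nat -> C), (sqnorm N a <= 1)%R ->
        exists i : nat, (i < K)%nat /\
          forall L : nat,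
            sum_n_m (fun m => Rsqr (Cmod (Cminus (Mapply alpha N a m) (y i m)))) 1%nat L
              <= Rsqr eps.

(* Main.v *)
Require Import Defs.
From mathcomp Require Import all_boot.
From Stdlib Require Import Reals Lra Lia.
From Coquelicot Require Import Coquelicot.
Local Open Scope nat_scope.

Lemma primes_le (n p : nat) : p \in primes n -> (p <= n)%N.
Proof.
rewrite mem_primes => /and3P[_ n0 d]; exact: dvdn_leq.
Qed.

Lemma DweightE (n B : nat) : (n < B)%N ->
  Dweight n = (\sum_(0 <= p < B) prime_index p * logn p n)%N.
Proof.
move=> nB; rewrite /Dweight.
transitivity (\sum_(0 <= p < B | p \in primes n) prime_index p * logn p n)%N; last first.
  rewrite big_mkcond /=; apply: eq_bigr => p _.
  case: ifP => // hp; have : ~~ (0 < logn p n)%N by rewrite logn_gt0 hp.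
  by rewrite -eqn0Ngt => /eqP ->; rewrite muln0.
rewrite -[in RHS]big_filter; apply: perm_big; rewrite /index_iota subn0; apply: uniq_perm.
- exact: primes_uniq.
- by rewrite filter_uniq // iota_uniq.
move=> p; rewrite mem_filter mem_iota /=.
case hp: (p \in primes n) => //=.
by rewrite add0n (leq_ltn_trans (primes_le _ _ hp) nB).
Qed.

Lemma Dweight_mul (n m : nat) : (0 < n)%N -> (0 < m)%N ->
  Dweight (n * m) = (Dweight n + Dweight m)%N.
Proof.
move=> n0 m0.
have hB : (n * m < (n * m).+1)%N by [].
have hn : (n < (n * m).+1)%N by rewrite ltnS leq_pmulr.
have hm : (m < (n * m).+1)%N by rewrite ltnS leq_pmull.
rewrite (DweightE _ _ hB) (DweightE _ _ hn) (DweightE _ _ hm) -big_split /=.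
apply: eq_bigr => p _; by rewrite lognM // mulnDr.
Qed.

Lemma Dweight_prime (p : nat) : prime p -> Dweight p = prime_index p.
Proof.
move=> pp; rewrite /Dweight primes_prime // big_seq1 logn_prime // eqxx muln1 //.
Qed.

Lemma prime_index_S (p : nat) :
  prime_index p.+1 = (prime_index p + prime p.+1)%N.
Proof.
rewrite /prime_index -addn1 iotaD count_cat /= addn0 add0n //.
Qed.

Lemma prime_index_mono (p q : nat) : (p <= q)%N -> (prime_index p <= prime_index q)%N.
Proof.
move/subnK => <-; elim: (q - p)%N => [|k IH] //=.
by rewrite addSn prime_index_S (leq_trans IH) // leq_addr.
Qed.

Lemma prime_index_pos (p : nat) : prime p -> (0 < prime_index p)%N.
Proof.
move=> pp; case: p pp => // p pp; rewrite prime_index_S pp addn1 //.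
Qed.

Lemma prime_index_large (k : nat) : exists P, forall p, (P < p)%N -> (k < prime_index p)%N.
Proof.
elim: k => [|k [P HP]].
  exists 1%N => p hp; apply: (@leq_trans (prime_index 2)) => //.
  exact: prime_index_mono.
case: (prime_above P.+1) => q hq pq.
exists q => p hp.
apply: (@leq_trans (prime_index q)); last exact: prime_index_mono (ltnW hp).
case: q hq pq hp => // q hq pq hp.
rewrite prime_index_S pq addn1 ltnS; apply: HP; by [].
Qed.

Lemma Dweight_bound (k : nat) : exists B, forall n, (0 < n)%N -> (Dweight n <= k)%N -> (n <= B)%N.
Proof.
case: (prime_index_large k) => P HP.
have P1 : forall p, prime p -> (prime_index p <= k)%N -> (p <= P)%N.
  move=> p _ hk; rewrite leqNgt; apply/negP => /HP; by rewrite ltnNge hk.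
suff H : forall n, (0 < n)%N -> (Dweight n <= k)%N -> (n <= expn P.+1 (Dweight n))%N.
  exists (expn P.+1 k) => n n0 hk; apply: (leq_trans (H n n0 hk)).
  by rewrite leq_pexp2l.
move=> n; elim/ltn_ind: n => n IH n0 hk.
case: (ltngtP n 1) => [|h1|->]; first by case: n n0 IH hk.
- set p := pdiv n.
  have pp : prime p by apply: pdiv_prime.
  have pd : (p %| n)%N by apply: pdiv_dvd.
  have en : n = (p * (n %/ p))%N by rewrite mulnC divnK.
  have m0 : (0 < n %/ p)%N by rewrite divn_gt0 ?prime_gt0 // dvdn_leq // ltnW.
  have mlt : (n %/ p < n)%N by rewrite ltn_Pdiv // prime_gt1.
  have ew : Dweight n = (prime_index p + Dweight (n %/ p))%N.
    rewrite {1}en Dweight_mul. by rewrite Dweight_prime. exact: prime_gt0. exact: m0.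
  have hpk : (prime_index p <= k)%N by apply: leq_trans hk; rewrite ew leq_addr.
  have hmk : (Dweight (n %/ p) <= k)%N by apply: leq_trans hk; rewrite ew leq_addl.
  have IHm := IH (n %/ p) mlt m0 hmk.
  rewrite {1}en ew expnD.
  apply: leq_mul.
    apply: (@leq_trans (P.+1)); first by apply: leqW; apply: P1.
    by rewrite -{1}(expn1 P.+1) leq_pexp2l // prime_index_pos.
  exact: IHm.
by rewrite expn_gt0.
Qed.

Lemma Dweight_max (L : nat) : exists k, forall m, (m <= L)%N -> (Dweight m <= k)%N.
Proof.
elim: L => [|L [k Hk]].
  exists (Dweight 0) => m; by rewrite leqn0 => /eqP ->.
exists (maxn k (Dweight L.+1)) => m; rewrite leq_eqVlt => /orP[/eqP ->|].
  by rewrite leq_max leqnn orbT.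
rewrite ltnS => /Hk h; by rewrite leq_max h.
Qed.

Local Open Scope R_scope.
Lemma sum1_0 {G : AbelianMonoid} (f : nat -> G) : sum_n_m f 1 0 = zero.
Proof. apply sum_n_m_zero; lia. Qed.

Lemma sum1_S {G : AbelianMonoid} (f : nat -> G) (N : nat) :
  sum_n_m f 1 (S N) = plus (sum_n_m f 1 N) (f (S N)).
Proof. apply sum_n_Sm; lia. Qed.

Lemma sumR_le_loc (f g : nat -> R) (N : nat) :
  (forall k : nat, ((1 <= k)%coq_nat /\ (k <= N)%coq_nat) -> f k <= g k) ->
  sum_n_m f 1 N <= sum_n_m g 1 N.
Proof.
induction N as [|N IH]; intros H.
- rewrite !sum1_0; lra.
- rewrite !sum1_S. change (plus ?a ?b) with (a + b).
  assert (sum_n_m f 1 N <= sum_n_m g 1 N) by (apply IH; intros; apply H; lia).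
  assert (f (S N) <= g (S N)) by (apply H; lia). lra.
Qed.

Lemma sumR_nonneg (f : nat -> R) (N : nat) :
  (forall k : nat, 0 <= f k) -> 0 <= sum_n_m f 1 N.
Proof.
intros H; induction N as [|N IH].
- rewrite sum1_0; change (@zero R_AbelianMonoid) with 0; lra.
- rewrite sum1_S; change (plus ?a ?b) with (a + b); specialize (H (S N)); lra.
Qed.

Lemma sumR_mono (f : nat -> R) (L N : nat) :
  (forall k : nat, 0 <= f k) -> (L <= N)%coq_nat -> sum_n_m f 1 L <= sum_n_m f 1 N.
Proof.
intros H LN; induction N as [|N IH].
- assert (L = 0%nat) by lia; subst; lra.
- destruct (Nat.eq_dec L (S N)) as [->|ne]; [lra|].
  rewrite sum1_S; change (plus ?a ?b) with (a + b); specialize (H (S N)).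
  assert (sum_n_m f 1 L <= sum_n_m f 1 N) by (apply IH; lia). lra.
Qed.

Lemma sumR_plus (f g : nat -> R) (N : nat) :
  sum_n_m (fun k => f k + g k) 1 N = sum_n_m f 1 N + sum_n_m g 1 N.
Proof. apply (sum_n_m_plus (G:=R_AbelianMonoid)). Qed.

Lemma sumR_scal (c : R) (f : nat -> R) (N : nat) :
  sum_n_m (fun k => c * f k) 1 N = c * sum_n_m f 1 N.
Proof. apply (sum_n_m_mult_l (K:=R_Ring)). Qed.

Lemma sumR_last (f : nat -> R) (N m : nat) :
  (forall k : nat, 0 <= f k) -> ((1 <= m)%coq_nat /\ (m <= N)%coq_nat) -> f m <= sum_n_m f 1 N.
Proof.
intros H [m1 mN].
apply Rle_trans with (sum_n_m f 1 m); [|apply sumR_mono; auto].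
destruct m as [|m]; [lia|]. rewrite sum1_S; change (plus ?a ?b) with (a + b).
pose proof (sumR_nonneg f m H); lra.
Qed.

Lemma sumC_minus (f g : nat -> C) (N : nat) :
  sum_n_m (fun k => (f k - g k)%C) 1 N = (sum_n_m f 1 N - sum_n_m g 1 N)%C.
Proof.
induction N as [|N IH].
- rewrite !sum1_0. change (@zero C_AbelianMonoid) with (RtoC 0). apply injective_projections; simpl; lra.
- rewrite !sum1_S IH. change (@plus C_AbelianMonoid ?a ?b) with (Cplus a b).
  change (@eq (AbelianMonoid.sort C_AbelianMonoid)) with (@eq C). ring.
Qed.

Lemma sumC_scal (c : C) (f : nat -> C) (N : nat) :
  sum_n_m (fun k => (c * f k)%C) 1 N = (c * sum_n_m f 1 N)%C.
Proof. apply (sum_n_m_mult_l (K:=C_Ring)). Qed.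

Lemma sumC_RtoC (f : nat -> R) (N : nat) :
  RtoC (sum_n_m f 1 N) = @sum_n_m C_AbelianMonoid (fun k => RtoC (f k)) 1 N.
Proof.
induction N as [|N IH].
- rewrite !sum1_0. reflexivity.
- rewrite !sum1_S -IH. change (@plus C_AbelianMonoid ?a ?b) with (Cplus a b).
  change (@plus R_AbelianMonoid ?a ?b) with (Rplus a b). now rewrite RtoC_plus.
Qed.

Lemma sumC_norm (f : nat -> C) (N : nat) :
  Cmod (sum_n_m f 1 N) <= sum_n_m (fun k => Cmod (f k)) 1 N.
Proof.
induction N as [|N IH].
- rewrite !sum1_0. change (@zero C_AbelianMonoid) with (RtoC 0). rewrite Cmod_0. change (@zero R_AbelianMonoid) with 0. lra.
- rewrite !sum1_S. change (@plus C_AbelianMonoid ?a ?b) with (Cplus a b).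
  change (@plus R_AbelianMonoid ?a ?b) with (a + b).
  eapply Rle_trans; [apply Cmod_triangle|]. lra.
Qed.

Lemma sum_swap {G : AbelianMonoid} (f : nat -> nat -> G) (a b d : nat) :
  sum_n_m (fun n => sum_n_m (fun m => f n m) a b) 1 d =
  sum_n_m (fun m => sum_n_m (fun n => f n m) 1 d) a b.
Proof.
induction d as [|d IH].
- rewrite sum1_0. symmetry. rewrite (sum_n_m_ext _ (fun _ => zero)).
  apply sum_n_m_const_zero. intros; apply sum1_0.
- rewrite sum1_S IH. rewrite -sum_n_m_plus. apply sum_n_m_ext; intros; now rewrite sum1_S.
Qed.

Lemma sum_trunc {G : AbelianMonoid} (f : nat -> G) (N N' : nat) :
  (N <= N')%coq_nat -> (forall k : nat, ((N < k)%coq_nat /\ (k <= N')%coq_nat) -> f k = zero) ->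
  sum_n_m f 1 N' = sum_n_m f 1 N.
Proof.
intros H Hz; induction N' as [|N' IH].
- assert (N = 0%nat) by lia; now subst.
- destruct (Nat.eq_dec N (S N')) as [->|ne]; [reflexivity|].
  rewrite sum1_S IH; [|lia|intros; apply Hz; lia].
  rewrite Hz; [apply plus_zero_r|lia].
Qed.

Lemma CS_key (S A B a b : R) : S * S <= A * B -> 0 <= A -> 0 <= B ->
  2 * S * a * b <= A * (b * b) + (a * a) * B.
Proof.
intros H HA HB.
assert (R0 : 0 <= A * (b * b) + (a * a) * B) by nra.
destruct (Rle_lt_dec (2 * S * a * b) 0) as [h|h]; [lra|].
apply Rsqr_incr_0; try lra. unfold Rsqr.
assert (E : (2 * S * a * b) * (2 * S * a * b) = 4 * (S * S) * ((a * a) * (b * b))) by ring.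
rewrite E.
assert (0 <= (a * a) * (b * b)) by nra.
assert (4 * (S * S) * ((a * a) * (b * b)) <= 4 * (A * B) * ((a * a) * (b * b))) by nra.
assert (0 <= (A * (b * b) - (a * a) * B) * (A * (b * b) - (a * a) * B)) by apply (Rle_0_sqr (A * (b * b) - (a * a) * B)).
assert (E2 : (A * (b * b) + (a * a) * B) * (A * (b * b) + (a * a) * B) =
  (A * (b * b) - (a * a) * B) * (A * (b * b) - (a * a) * B) + 4 * (A * B) * ((a * a) * (b * b))) by ring.
lra.
Qed.

Lemma CS_R (a b : nat -> R) (N : nat) :
  sum_n_m (fun k => a k * b k) 1 N * sum_n_m (fun k => a k * b k) 1 N <=
  sum_n_m (fun k => a k * a k) 1 N * sum_n_m (fun k => b k * b k) 1 N.
Proof.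
induction N as [|N IH].
- rewrite !sum1_0; change (@zero R_AbelianMonoid) with 0; lra.
- rewrite !sum1_S. change (@plus R_AbelianMonoid ?x ?y) with (x + y).
  set Ss := sum_n_m (fun k => a k * b k) 1 N in IH |- *.
  set A := sum_n_m (fun k => a k * a k) 1 N in IH |- *.
  set B := sum_n_m (fun k => b k * b k) 1 N in IH |- *.
  assert (HA : 0 <= A) by (apply sumR_nonneg; intros; nra).
  assert (HB : 0 <= B) by (apply sumR_nonneg; intros; nra).
  pose proof (CS_key Ss A B (a (S N)) (b (S N)) IH HA HB).
  nra.
Qed.

Lemma CS_C (x y : nat -> C) (N : nat) :
  Cmod (sum_n_m (fun k => (x k * y k)%C) 1 N) <= sqrt (sqnorm N x) * sqrt (sqnorm N y).
Proof.
eapply Rle_trans; [apply sumC_norm|].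
rewrite (sum_n_m_ext _ (fun k => Cmod (x k) * Cmod (y k))); [|intros; apply Cmod_mult].
unfold sqnorm, Rsqr. rewrite -sqrt_mult; try (apply sumR_nonneg; intros; nra).
set Ss := sum_n_m _ 1 N.
assert (0 <= Ss) by (apply sumR_nonneg; intros; pose proof (Cmod_ge_0 (x k)); pose proof (Cmod_ge_0 (y k)); nra).
rewrite -(sqrt_Rsqr Ss) //. apply sqrt_le_1_alt. unfold Rsqr. apply CS_R.
Qed.

Lemma sq_tri_R (p q w : R) : 0 <= p -> 0 <= q -> 0 <= w -> p <= q + w ->
  Rsqr p <= 2 * Rsqr q + 2 * Rsqr w.
Proof.
intros. assert (p * p <= (q + w) * (q + w)) by (apply Rmult_le_compat; lra).
pose proof (Rle_0_sqr (q - w)). unfold Rsqr in *. nra.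
Qed.

Lemma sq_tri (u v : C) : Rsqr (Cmod u) <= 2 * Rsqr (Cmod v) + 2 * Rsqr (Cmod (u - v)).
Proof.
assert (E : u = (v + (u - v))%C) by ring.
assert (H : Cmod u <= Cmod v + Cmod (u - v)) by (rewrite {1}E; apply Cmod_triangle).
pose proof (Cmod_ge_0 u); pose proof (Cmod_ge_0 v); pose proof (Cmod_ge_0 (u - v)).
apply sq_tri_R; auto.
Qed.

Lemma sqnorm_nonneg (N : nat) (a : nat -> C) : 0 <= sqnorm N a.
Proof. apply sumR_nonneg; intros; apply Rle_0_sqr. Qed.

Ltac Cring := match goal with |- @eq _ ?x ?y => change (@eq C x y) end; ring.

Definition trunc (N : nat) (a : nat -> C) : nat -> C :=
  fun n => if (n <=? N)%nat then a n else RtoC 0.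

Lemma sqnorm_trunc (N N' : nat) (a : nat -> C) : (N <= N')%coq_nat ->
  sqnorm N' (trunc N a) = sqnorm N a.
Proof.
intros H; unfold sqnorm.
rewrite (sum_trunc _ N N' H).
- apply sum_n_m_ext_loc; intros k [_ hk]; unfold trunc.
  destruct (Nat.leb_spec k N); [reflexivity|lia].
- intros k [hk _]; unfold trunc. destruct (Nat.leb_spec k N); [lia|].
  rewrite Cmod_0 Rsqr_0; reflexivity.
Qed.

Lemma Mform_trunc (beta : nat -> C) (N L : nat) (a : nat -> C) :
  Mform beta (Nat.max N L) (trunc N a) (trunc L (Mapply beta N a)) =
  RtoC (sqnorm L (Mapply beta N a)).
Proof.
set z := Mapply beta N a. set N' := Nat.max N L.
unfold Mform. rewrite sum_swap.
rewrite (sum_n_m_ext_loc _ (fun m => (Cconj (trunc L z m) * z m)%C)).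
- rewrite (sum_trunc _ L N'); [|lia|].
  + unfold sqnorm. rewrite sumC_RtoC. apply sum_n_m_ext_loc; intros k [_ hk].
    unfold trunc. destruct (Nat.leb_spec k L); [|lia].
    rewrite /Rsqr RtoC_mult -RtoC_mult.
    replace (Cmod (z k) * Cmod (z k)) with (Cmod (z k) ^ 2) by (simpl; ring).
    rewrite (Cmod2_conj (z k)). Cring.
  + intros k [hk _]. unfold trunc. destruct (Nat.leb_spec k L); [lia|].
    change (@zero C_AbelianMonoid) with (RtoC 0). rewrite /Cconj /=. apply injective_projections; simpl; lra.
- intros m [m1 mN].
  rewrite (sum_n_m_ext _ (fun n => (Cconj (trunc L z m) * (beta (n * m)%nat * trunc N a n))%C)); [|intros; Cring].
  rewrite sumC_scal. f_equal. unfold z, Mapply.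
  rewrite (sum_trunc _ N N'); [|lia|].
  + apply sum_n_m_ext_loc; intros k [_ hk]. unfold trunc. destruct (Nat.leb_spec k N); [|lia].
    reflexivity.
  + intros k [hk _]. unfold trunc. destruct (Nat.leb_spec k N); [lia|].
    change (@zero C_AbelianMonoid) with (RtoC 0). apply injective_projections; simpl; lra.
Qed.

Lemma D1 (beta : nat -> C) (C0 : R) : 0 <= C0 ->
  (forall (N : nat) (a b : nat -> C),
     Cmod (Mform beta N a b) <= C0 * sqrt (sqnorm N a) * sqrt (sqnorm N b)) ->
  forall (N : nat) (a : nat -> C) (L : nat),
    sqnorm L (Mapply beta N a) <= C0 * C0 * sqnorm N a.
Proof.
intros HC H N a L.
pose proof (H (Nat.max N L) (trunc N a) (trunc L (Mapply beta N a))) as H1.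
rewrite Mform_trunc sqnorm_trunc in H1; [|lia].
rewrite sqnorm_trunc in H1; [|lia].
set S := sqnorm L (Mapply beta N a) in H1 |- *.
set A := sqnorm N a in H1 |- *.
assert (hS : 0 <= S) by apply sqnorm_nonneg.
assert (hA : 0 <= A) by apply sqnorm_nonneg.
rewrite Cmod_R Rabs_pos_eq in H1; auto.
assert (eS : S = sqrt S * sqrt S) by (rewrite sqrt_sqrt; auto).
assert (eA : A = sqrt A * sqrt A) by (rewrite sqrt_sqrt; auto).
set s := sqrt S in H1 eS |- *. set t := sqrt A in H1 eA |- *.
assert (0 <= s) by apply sqrt_pos. assert (0 <= t) by apply sqrt_pos.
rewrite eS eA.
destruct (Rle_lt_dec s 0) as [h|h].
- assert (s = 0) by lra. rewrite H3. nra.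
- assert (s * s <= C0 * t * s) by lra.
  assert (s <= C0 * t) by nra.
  assert (s * s <= (C0 * t) * (C0 * t)) by (apply Rmult_le_compat; lra).
  nra.
Qed.

Lemma B1 (alpha : nat -> C) : Mbounded alpha ->
  exists K0, 0 <= K0 /\ forall (N : nat) (a : nat -> C) (L : nat),
    sqnorm L (Mapply alpha N a) <= K0 * K0 * sqnorm N a.
Proof.
intros [K HK]. exists (Rabs K); split; [apply Rabs_pos|].
apply D1; [apply Rabs_pos|]. intros N a b.
eapply Rle_trans; [apply HK|].
pose proof (sqrt_pos (sqnorm N a)); pose proof (sqrt_pos (sqnorm N b)).
pose proof (Rle_abs K).
rewrite !Rmult_assoc. apply Rmult_le_compat_r; [nra|lra].
Qed.

Lemma DwR (n m : nat) : (1 <= n)%coq_nat -> (1 <= m)%coq_nat ->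
  Dweight (n * m) = (Dweight n + Dweight m)%nat.
Proof. intros hn hm; apply Dweight_mul; apply/ltP; lia. Qed.

Lemma Mapply_Dr (r : R) (alpha : nat -> C) (N : nat) (a : nat -> C) (m : nat) :
  (1 <= m)%coq_nat ->
  Mapply (Dr r alpha) N a m = (RtoC (r ^ Dweight m) * Mapply alpha N (Dr r a) m)%C.
Proof.
intros hm; unfold Mapply. rewrite -sumC_scal.
apply sum_n_m_ext_loc; intros n [hn _]. unfold Dr.
rewrite DwR; auto. rewrite pow_add RtoC_mult. Cring.
Qed.

Lemma Mapply_minus (b1 b2 : nat -> C) (N : nat) (a : nat -> C) (m : nat) :
  Mapply (fun k => (b1 k - b2 k)%C) N a m = (Mapply b1 N a m - Mapply b2 N a m)%C.
Proof.
unfold Mapply. rewrite -sumC_minus. apply sum_n_m_ext; intros; Cring.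
Qed.

Lemma Mform_minus (b1 b2 : nat -> C) (N : nat) (a b : nat -> C) :
  Mform (fun k => (b1 k - b2 k)%C) N a b = (Mform b1 N a b - Mform b2 N a b)%C.
Proof.
unfold Mform. rewrite -sumC_minus. apply sum_n_m_ext; intros.
rewrite -sumC_minus. apply sum_n_m_ext; intros; Cring.
Qed.

Lemma pow_le1 (r : R) (k : nat) : 0 <= r <= 1 -> 0 <= r ^ k <= 1.
Proof.
intros H; induction k as [|k IH]; simpl; [lra|nra].
Qed.

Lemma sqnorm_Dr (r : R) (N : nat) (a : nat -> C) : 0 <= r <= 1 ->
  sqnorm N (Dr r a) <= sqnorm N a.
Proof.
intros H; apply sumR_le_loc; intros k _. unfold Dr.
rewrite Cmod_mult Cmod_R. pose proof (pow_le1 r (Dweight k) H).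
rewrite Rabs_pos_eq; [|lra]. pose proof (Cmod_ge_0 (a k)).
unfold Rsqr. assert (r ^ Dweight k * Cmod (a k) <= Cmod (a k)) by nra.
assert (0 <= r ^ Dweight k * Cmod (a k)) by nra.
apply Rmult_le_compat; lra.
Qed.

Lemma pt_bound (z : nat -> C) (K : R) (m : nat) : (1 <= m)%coq_nat -> 0 <= K ->
  sqnorm m z <= K * K -> Cmod (z m) <= K.
Proof.
intros hm hK H.
assert (Rsqr (Cmod (z m)) <= sqnorm m z) by (apply (sumR_last (fun k => Rsqr (Cmod (z k)))); [intros; apply Rle_0_sqr|lia]).
apply Rsqr_incr_0_var; auto. unfold Rsqr in *; lra.
Qed.

Lemma Rabs_le_inv' (x K : R) : Rabs x <= K -> - K <= x <= K.
Proof. intros H. pose proof (Rle_abs x). pose proof (Rle_abs (- x)). rewrite Rabs_Ropp in H1. lra. Qed.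

Lemma grid (h : R) (n : nat) : 0 < h -> forall x, 0 <= x < INR n * h ->
  exists j, (j < n)%coq_nat /\ Rabs (x - INR j * h) <= h.
Proof.
intros hh; induction n as [|n IH]; intros x [h0 h1].
- simpl in h1; lra.
- destruct (Rlt_le_dec x (INR n * h)) as [l|l].
  + destruct (IH x (conj h0 l)) as [j [hj hj']]. exists j; split; [lia|auto].
  + exists n; split; [lia|]. rewrite S_INR in h1. rewrite Rabs_pos_eq; lra.
Qed.

Lemma net1 (K eta : R) : 0 < eta -> exists (G : nat) (c : nat -> C),
  (0 < G)%coq_nat /\ forall w : C, Cmod w <= K ->
    exists j, (j < G)%coq_nat /\ Cmod (w - c j) <= eta.
Proof.
intros he. set h := eta / 2.
assert (hh : 0 < h) by (unfold h; lra).
destruct (INR_archimed h (2 * K) hh) as [n0 hn0].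
set n := S n0.
assert (hn : INR n * h > 2 * K) by (unfold n; rewrite S_INR; nra).
exists (Nat.mul n n), (fun j => (-K + INR (Nat.div j n) * h, -K + INR (Nat.modulo j n) * h)).
split; [unfold n; apply Nat.mul_pos_pos; lia|].
intros w hw.
assert (h1 : Rabs (fst w) <= K) by (eapply Rle_trans; [apply re_le_Cmod|auto]).
assert (h2 : Rabs (snd w) <= K).
{ eapply Rle_trans; [|apply hw]. eapply Rle_trans; [|apply Rmax_Cmod]. apply Rmax_r. }
apply Rabs_le_inv' in h1. apply Rabs_le_inv' in h2.
destruct (grid h n hh (fst w + K)) as [j1 [hj1 hj1']]; [lra|].
destruct (grid h n hh (snd w + K)) as [j2 [hj2 hj2']]; [lra|].
exists (Nat.add (Nat.mul j1 n) j2); split.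
{ assert (Hm : (Nat.mul (S j1) n <= Nat.mul n n)%coq_nat) by (apply Nat.mul_le_mono_r; lia).
  rewrite Nat.mul_succ_l in Hm. lia. }
assert (n <> 0%nat) by (unfold n; lia).
rewrite Nat.div_add_l // Nat.div_small // Nat.add_0_r.
rewrite Nat.add_comm Nat.Div0.mod_add Nat.mod_small //.
eapply Rle_trans; [apply Cmod_2Rmax|]. simpl.
assert (Rmax (Rabs (fst w - (- K + INR j1 * h))) (Rabs (snd w - (- K + INR j2 * h))) <= h).
{ apply Rmax_lub; [replace (fst w - (- K + INR j1 * h)) with (fst w + K - INR j1 * h) by ring; auto|
                   replace (snd w - (- K + INR j2 * h)) with (snd w + K - INR j2 * h) by ring; auto]. }
assert (sqrt 2 < 2).
{ pose proof (sqrt_pos 2). assert (sqrt 2 * sqrt 2 = 2) by (apply sqrt_sqrt; lra). nra. }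
assert (0 <= Rmax (Rabs (fst w - (- K + INR j1 * h))) (Rabs (snd w - (- K + INR j2 * h)))).
{ eapply Rle_trans; [apply Rabs_pos|apply Rmax_l]. }
pose proof (sqrt_pos 2).
set M := Rmax _ _ in H0 H2 |- *.
assert (sqrt 2 * M <= 2 * M) by (apply Rmult_le_compat_r; lra).
unfold h in *. lra.
Qed.

Lemma netB (B : nat) (K eta : R) : 0 < eta -> exists (G : nat) (y : nat -> nat -> C),
  (0 < G)%coq_nat /\ forall z : nat -> C,
    (forall m : nat, (1 <= m)%coq_nat -> (m <= B)%coq_nat -> Cmod (z m) <= K) ->
    exists i, (i < G)%coq_nat /\
      forall m : nat, (1 <= m)%coq_nat -> (m <= B)%coq_nat -> Cmod (z m - y i m) <= eta.
Proof.
intros he. induction B as [|B [G [y [hG Hy]]]].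
- exists 1%nat, (fun _ _ => RtoC 0). split; [lia|]. intros z _. exists 0%nat; split; [lia|].
  intros; lia.
- destruct (net1 K eta he) as [G1 [c [hG1 Hc]]].
  exists (Nat.mul G G1), (fun i m => if (m =? S B)%nat then c (Nat.modulo i G1) else y (Nat.div i G1) m).
  split; [nia|]. intros z hz.
  destruct (Hy z) as [i [hi Hi]]; [intros; apply hz; lia|].
  destruct (Hc (z (S B))) as [j [hj Hj]]; [apply hz; lia|].
  exists (Nat.add (Nat.mul i G1) j); split.
  { assert (Hm : (Nat.mul (S i) G1 <= Nat.mul G G1)%coq_nat) by (apply Nat.mul_le_mono_r; lia).
    rewrite Nat.mul_succ_l in Hm. lia. }
  assert (G1 <> 0%nat) by lia.
  intros m hm1 hm2. destruct (Nat.eqb_spec m (S B)) as [->|ne].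
  + rewrite Nat.add_comm Nat.Div0.mod_add Nat.mod_small //.
  + rewrite Nat.div_add_l // Nat.div_small // Nat.add_0_r. apply Hi; lia.
Qed.

Lemma sum_ind_const (L B : nat) (c : R) : 0 <= c ->
  sum_n_m (fun m => if (m <=? B)%nat then c else 0) 1 L <= INR B * c.
Proof.
intros hc.
assert (E : sum_n_m (fun m => if (m <=? B)%nat then c else 0) 1 B = INR B * c).
{ rewrite (sum_n_m_ext_loc _ (fun _ => c)).
  - rewrite sum_n_m_const. f_equal. f_equal. lia.
  - intros k [_ hk]. destruct (Nat.leb_spec k B); [reflexivity|lia]. }
destruct (Nat.le_gt_cases L B) as [h|h].
- rewrite -E. apply sumR_mono; [|lia]. intros k; destruct (k <=? B)%nat; lra.
- rewrite (sum_trunc _ B L); [lra|lia|]. intros k [hk _]. destruct (Nat.leb_spec k B); [lia|reflexivity].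
Qed.

Lemma dir2 (alpha : nat -> C) : Mbounded alpha ->
  (forall eps : R, (0 < eps)%R ->
      exists delta : R, (0 < delta)%R /\
        forall r : R, (0 < r)%R -> (1 - delta < r)%R -> (r < 1)%R ->
          Mdiff_norm_le (Dr r alpha) alpha eps) -> Mcompact alpha.
Proof.
intros Hb H eps heps.
destruct (B1 alpha Hb) as [K0 [hK0 HK0]].
set e1 := eps / 3. assert (he1 : 0 < e1) by (unfold e1; lra).
destruct (H e1 he1) as [delta [hd Hr]].
set r := Rmax (1/2) (1 - delta/2).
assert (hr0 : 1/2 <= r) by apply Rmax_l.
assert (hr1 : 1 - delta/2 <= r) by apply Rmax_r.
assert (hr2 : r < 1) by (unfold r; apply Rmax_lub_lt; lra).
assert (HD := Hr r ltac:(lra) ltac:(lra) hr2).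
assert (Hdiff : forall (N : nat) (a : nat -> C) (L : nat),
  sqnorm L (Mapply (fun k => (Dr r alpha k - alpha k)%C) N a) <= e1 * e1 * sqnorm N a).
{ apply D1; [lra|]. intros N a b. rewrite Mform_minus. apply HD. }
set c := e1 / (K0 + 1).
assert (hc : 0 < c) by (unfold c; apply Rdiv_lt_0_compat; lra).
destruct (pow_lt_1_zero r ltac:(rewrite Rabs_pos_eq; lra) c hc) as [k0 Hk0].
destruct (Dweight_bound k0) as [B HB].
set eta := e1 / (INR B + 1).
assert (heta : 0 < eta) by (unfold eta; apply Rdiv_lt_0_compat; [lra|]; pose proof (pos_INR B); lra).
destruct (netB B K0 eta heta) as [G [y [hG Hy]]].
exists G, (fun i m => if (m <=? B)%nat then y i m else RtoC 0).
intros N a ha.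
set z := Mapply (Dr r alpha) N a.
set u := Mapply alpha N (Dr r a).
assert (hDa : sqnorm N (Dr r a) <= 1) by (eapply Rle_trans; [apply sqnorm_Dr; lra|auto]).
assert (hu : forall L, sqnorm L u <= K0 * K0).
{ intros L. eapply Rle_trans; [apply HK0|]. pose proof (sqnorm_nonneg N (Dr r a)). nra. }
assert (hzu : forall m, (1 <= m)%coq_nat -> z m = (RtoC (r ^ Dweight m) * u m)%C).
{ intros m hm. unfold z, u. apply Mapply_Dr; auto. }
assert (hpow : forall m, 0 <= r ^ Dweight m <= 1) by (intros; apply pow_le1; lra).
assert (hzb : forall m, (1 <= m)%coq_nat -> Cmod (z m) <= Cmod (u m)).
{ intros m hm. rewrite hzu // Cmod_mult Cmod_R. specialize (hpow m).
  rewrite Rabs_pos_eq; [|lra]. pose proof (Cmod_ge_0 (u m)). nra. }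
destruct (Hy z) as [i [hi Hi]].
{ intros m hm1 hm2. eapply Rle_trans; [apply hzb; auto|]. apply (pt_bound u K0 m hm1 hK0 (hu m)). }
exists i; split; [apply/ltP; lia|].
intros L.
set g := fun m => 2 * ((if (m <=? B)%nat then eta * eta else 0) + c * c * Rsqr (Cmod (u m)))
   + 2 * Rsqr (Cmod (Mapply (fun k => (Dr r alpha k - alpha k)%C) N a m)).
apply Rle_trans with (sum_n_m g 1 L).
{ apply sumR_le_loc. intros m [hm1 hmL]. unfold g.
  eapply Rle_trans; [apply (sq_tri _ (z m - (if (m <=? B)%nat then y i m else RtoC 0))%C)|].
  apply Rplus_le_compat.
  - apply Rmult_le_compat_l; [lra|].
    assert (0 <= c * c * Rsqr (Cmod (u m))) by (pose proof (Rle_0_sqr (Cmod (u m))); nra).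
    destruct (Nat.leb_spec m B) as [hmB|hmB].
    + pose proof (Hi m hm1 hmB). pose proof (Cmod_ge_0 (z m - y i m)).
      assert (Rsqr (Cmod (z m - y i m)) <= eta * eta) by (unfold Rsqr; apply Rmult_le_compat; lra).
      lra.
    + assert (E : (z m - RtoC 0)%C = z m) by Cring. rewrite E hzu // Cmod_mult Cmod_R.
      assert (hw : (k0 <= Dweight m)%coq_nat).
      { destruct (Nat.le_gt_cases k0 (Dweight m)) as [h|h]; auto.
        exfalso. assert (hmB2 : leq m B) by (apply HB; [apply/ltP; lia|apply/leP; lia]). move/leP: hmB2. lia. }
      specialize (Hk0 _ hw). rewrite Rabs_pos_eq in Hk0; [|specialize (hpow m); lra].
      rewrite Rabs_pos_eq; [|specialize (hpow m); lra].
      rewrite Rsqr_mult. pose proof (Rle_0_sqr (Cmod (u m))).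
      assert (Rsqr (r ^ Dweight m) <= c * c) by (specialize (hpow m); unfold Rsqr; apply Rmult_le_compat; lra).
      assert (Rsqr (r ^ Dweight m) * Rsqr (Cmod (u m)) <= c * c * Rsqr (Cmod (u m))) by (apply Rmult_le_compat_r; lra).
      lra.
  - apply Rmult_le_compat_l; [lra|]. rewrite Mapply_minus.
    right. f_equal. rewrite -Cmod_opp. f_equal. fold z. Cring. }
unfold g. rewrite sumR_plus !sumR_scal sumR_plus sumR_scal.
pose proof (sum_ind_const L B (eta * eta) ltac:(nra)).
fold (sqnorm L u).
fold (sqnorm L (Mapply (fun k => (Dr r alpha k - alpha k)%C) N a)).
pose proof (hu L). pose proof (Hdiff N a L).
assert (INR B * (eta * eta) <= e1 * e1).
{ unfold eta. pose proof (pos_INR B).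
  assert (E : INR B * (e1 / (INR B + 1) * (e1 / (INR B + 1))) = (e1 * e1) * (INR B / ((INR B + 1) * (INR B + 1)))) by (field; lra).
  rewrite E. assert (INR B / ((INR B + 1) * (INR B + 1)) <= 1).
  { apply Rcomplements.Rle_div_l; nra. }
  nra. }
assert (c * c * sqnorm L u <= e1 * e1).
{ assert (c * K0 <= e1).
  { unfold c. assert (E : e1 / (K0 + 1) * K0 = e1 * (K0 / (K0 + 1))) by (field; lra). rewrite E.
    assert (K0 / (K0 + 1) <= 1) by (apply Rcomplements.Rle_div_l; lra). nra. }
  assert (c * c * sqnorm L u <= c * c * (K0 * K0)) by (apply Rmult_le_compat_l; nra).
  assert ((c * K0) * (c * K0) <= e1 * e1) by (apply Rmult_le_compat; nra).
  replace (c * c * (K0 * K0)) with ((c * K0) * (c * K0)) in * by ring. lra. }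
assert (e1 * e1 * sqnorm N a <= e1 * e1) by nra.
unfold Rsqr. unfold e1 in *. nra.
Qed.

Lemma ind_tail (f : nat -> R) (L N : nat) : (forall k : nat, 0 <= f k) ->
  sum_n_m (fun m => if (L <? m)%nat then f m else 0) 1 N + sum_n_m f 1 L
  <= sum_n_m f 1 (Nat.max N L).
Proof.
intros Hf. induction N as [|N IH].
- rewrite sum1_0 Nat.max_0_l. change (@zero R_AbelianMonoid) with 0. lra.
- rewrite sum1_S. change (@plus R_AbelianMonoid ?x ?y) with (x + y).
  destruct (Nat.ltb_spec L (S N)) as [h|h].
  + rewrite Nat.max_l in IH; [|lia]. rewrite Nat.max_l; [|lia].
    rewrite sum1_S. change (@plus R_AbelianMonoid ?x ?y) with (x + y). lra.
  + rewrite Nat.max_r in IH; [|lia]. rewrite Nat.max_r; [|lia]. lra.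
Qed.

Lemma tail_small (f : nat -> R) (M : R) : (forall k : nat, 0 <= f k) ->
  (forall L : nat, sum_n_m f 1 L <= M) ->
  forall eps : R, 0 < eps -> exists L0 : nat, forall L : nat, (L0 <= L)%coq_nat ->
    forall N : nat, sum_n_m (fun m => if (L <? m)%nat then f m else 0) 1 N <= eps.
Proof.
intros Hf HM eps he.
set E := fun x => exists L : nat, x = sum_n_m f 1 L.
destruct (completeness E) as [s [Hs1 Hs2]].
{ exists M. intros x [L ->]. apply HM. }
{ exists (sum_n_m f 1 0). exists 0%nat. reflexivity. }
assert (exists L0, s - eps < sum_n_m f 1 L0) as [L0 HL0].
{ apply Classical_Prop.NNPP. intros Hn.
  assert (s <= s - eps); [|lra].
  apply Hs2. intros x [L ->]. apply Rnot_lt_le. intros Hl. apply Hn. exists L. lra. }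
exists L0. intros L hL N.
pose proof (ind_tail f L N Hf).
assert (sum_n_m f 1 (Nat.max N L) <= s) by (apply Hs1; eexists; reflexivity).
assert (sum_n_m f 1 L0 <= sum_n_m f 1 L) by (apply sumR_mono; auto).
lra.
Qed.

Lemma bernoulli (r : R) (k : nat) : 0 <= r <= 1 -> 1 - INR k * (1 - r) <= r ^ k.
Proof.
intros H. induction k as [|k IH].
- simpl; lra.
- rewrite S_INR. simpl. pose proof (pos_INR k).
  assert (0 <= r * (r ^ k - (1 - INR k * (1 - r)))) by (apply Rmult_le_pos; lra).
  assert (0 <= INR k * ((1 - r) * (1 - r))) by (apply Rmult_le_pos; nra).
  nra.
Qed.

Lemma pow_anti (r : R) (j k : nat) : 0 <= r <= 1 -> (j <= k)%coq_nat -> r ^ k <= r ^ j.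
Proof.
intros H hjk. replace k with (Nat.add j (Nat.sub k j)) by lia.
rewrite pow_add. pose proof (pow_le1 r j H). pose proof (pow_le1 r (Nat.sub k j) H). nra.
Qed.

Lemma uniform_L (Good : nat -> Prop) (Tail : nat -> nat -> Prop) (K : nat) :
  (forall i, Good i -> exists L0, forall L, (L0 <= L)%coq_nat -> Tail i L) ->
  exists L1, forall L, (L1 <= L)%coq_nat -> forall i, (i < K)%coq_nat -> Good i -> Tail i L.
Proof.
intros H. induction K as [|K [L1 HL1]].
- exists 0%nat. intros; lia.
- destruct (Classical_Prop.classic (Good K)) as [g|ng].
  + destruct (H K g) as [L0 HL0]. exists (Nat.max L0 L1). intros L hL i hi gi.
    destruct (Nat.eq_dec i K) as [->|ne]; [apply HL0; lia|apply HL1; auto; lia].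
  + exists L1. intros L hL i hi gi.
    destruct (Nat.eq_dec i K) as [->|ne]; [contradiction|apply HL1; auto; lia].
Qed.

Lemma K1 (alpha : nat -> C) : Mbounded alpha -> Mcompact alpha ->
  forall eps : R, 0 < eps -> exists delta : R, 0 < delta /\
    forall r : R, 0 < r -> 1 - delta < r -> r < 1 ->
      forall (N : nat) (c : nat -> C), sqnorm N c <= 1 ->
        sqnorm N (fun m => (RtoC (r ^ Dweight m - 1) * Mapply alpha N c m)%C) <= eps * eps.
Proof.
intros Hb Hc eps he.
destruct (B1 alpha Hb) as [K0 [hK0 HK0]].
set eta := eps / 3. assert (heta : 0 < eta) by (unfold eta; lra).
destruct (Hc eta heta) as [K [y Hy]].
set Good := fun i => exists (N0 : nat) (c0 : nat -> C), sqnorm N0 c0 <= 1 /\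
   forall L : nat, sqnorm L (fun m => (Mapply alpha N0 c0 m - y i m)%C) <= eta * eta.
set Tail := fun i L => forall N : nat,
   sum_n_m (fun m => if (L <? m)%nat then Rsqr (Cmod (y i m)) else 0) 1 N <= eta * eta.
destruct (uniform_L Good Tail K) as [L HL].
{ intros i [N0 [c0 [hc0 Hc0]]].
  apply (tail_small (fun m => Rsqr (Cmod (y i m))) (2 * (K0 * K0) + 2 * (eta * eta))).
  - intros; apply Rle_0_sqr.
  - intros L. apply Rle_trans with (sum_n_m (fun m => 2 * Rsqr (Cmod (Mapply alpha N0 c0 m)) +
        2 * Rsqr (Cmod (Mapply alpha N0 c0 m - y i m))) 1 L).
    + apply sumR_le_loc; intros m _.
      eapply Rle_trans; [apply (sq_tri (y i m) (Mapply alpha N0 c0 m))|].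
      replace (Cmod (y i m - Mapply alpha N0 c0 m)) with (Cmod (Mapply alpha N0 c0 m - y i m)); [lra|].
      rewrite -Cmod_opp. f_equal. Cring.
    + rewrite sumR_plus !sumR_scal.
      pose proof (HK0 N0 c0 L). pose proof (Hc0 L).
      assert (K0 * K0 * sqnorm N0 c0 <= K0 * K0) by (pose proof (sqnorm_nonneg N0 c0); nra).
      unfold sqnorm in *. lra.
  - nra. }
destruct (Dweight_max L) as [k Hk].
set eta' := eps / (3 * (K0 + 1)).
assert (heta' : 0 < eta') by (unfold eta'; apply Rdiv_lt_0_compat; lra).
exists (eta' / (INR k + 1)). split.
{ apply Rdiv_lt_0_compat; [lra|]. pose proof (pos_INR k); lra. }
intros r hr0 hr1 hr2 N c hc.
destruct (Hy N c hc) as [i [hi Hi]].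
assert (gi : Good i) by (exists N, c; split; auto).
assert (Ti := HL L (le_n L) i ltac:(apply/ltP; auto) gi).
set z := Mapply alpha N c.
assert (hsmall : forall m, (m <= L)%coq_nat -> Rsqr (r ^ Dweight m - 1) <= eta' * eta').
{ intros m hm.
  assert (hw : (Dweight m <= k)%coq_nat) by (apply/leP; apply Hk; apply/leP; auto).
  pose proof (pow_anti r _ _ ltac:(lra) hw).
  pose proof (bernoulli r k ltac:(lra)).
  pose proof (pow_le1 r (Dweight m) ltac:(lra)).
  pose proof (pos_INR k).
  assert (INR k * (1 - r) <= eta').
  { assert (1 - r < eta' / (INR k + 1)) by lra.
    assert (INR k * (1 - r) <= (INR k + 1) * (1 - r)) by nra.
    assert ((INR k + 1) * (1 - r) < (INR k + 1) * (eta' / (INR k + 1))) by (apply Rmult_lt_compat_l; lra).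
    assert (E : (INR k + 1) * (eta' / (INR k + 1)) = eta') by (field; lra).
    lra. }
  unfold Rsqr. replace ((r ^ Dweight m - 1) * (r ^ Dweight m - 1)) with ((1 - r ^ Dweight m) * (1 - r ^ Dweight m)) by ring.
  apply Rmult_le_compat; lra. }
set g := fun m => eta' * eta' * Rsqr (Cmod (z m)) + 2 * (if (L <? m)%nat then Rsqr (Cmod (y i m)) else 0)
   + 2 * Rsqr (Cmod (z m - y i m)).
apply Rle_trans with (sum_n_m g 1 N).
{ apply sumR_le_loc. intros m [hm1 hmN]. unfold g.
  rewrite Cmod_mult Cmod_R Rsqr_mult -Rsqr_abs.
  pose proof (Rle_0_sqr (Cmod (z m))). pose proof (Rle_0_sqr (Cmod (y i m))).
  pose proof (Rle_0_sqr (Cmod (z m - y i m))).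
  pose proof (Rle_0_sqr (r ^ Dweight m - 1)).
  destruct (Nat.ltb_spec L m) as [h|h].
  - assert (Rsqr (r ^ Dweight m - 1) <= 1).
    { pose proof (pow_le1 r (Dweight m) ltac:(lra)). unfold Rsqr.
      replace ((r ^ Dweight m - 1) * (r ^ Dweight m - 1)) with ((1 - r ^ Dweight m) * (1 - r ^ Dweight m)) by ring.
      replace 1 with (1 * 1) at 3 by ring. apply Rmult_le_compat; lra. }
    assert (Rsqr (r ^ Dweight m - 1) * Rsqr (Cmod (z m)) <= Rsqr (Cmod (z m))).
    { replace (Rsqr (Cmod (z m))) with (1 * Rsqr (Cmod (z m))) at 2 by ring. apply Rmult_le_compat_r; lra. }
    pose proof (sq_tri (z m) (y i m)).
    assert (0 <= eta' * eta' * Rsqr (Cmod (z m))) by nra.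
    lra.
  - pose proof (hsmall m h).
    assert (Rsqr (r ^ Dweight m - 1) * Rsqr (Cmod (z m)) <= eta' * eta' * Rsqr (Cmod (z m))) by (apply Rmult_le_compat_r; lra).
    lra. }
unfold g. rewrite !sumR_plus !sumR_scal.
pose proof (Ti N). pose proof (Hi N). pose proof (HK0 N c N).
fold (sqnorm N z).
assert (sqnorm N z <= K0 * K0) by (unfold z; pose proof (sqnorm_nonneg N c); nra).
assert (eta' * K0 <= eps / 3).
{ unfold eta'. assert (E : eps / (3 * (K0 + 1)) * K0 = (eps / 3) * (K0 / (K0 + 1))) by (field; lra). rewrite E.
  assert (K0 / (K0 + 1) <= 1) by (apply Rcomplements.Rle_div_l; lra). nra. }
assert (eta' * eta' * sqnorm N z <= (eps / 3) * (eps / 3)).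
{ assert (eta' * eta' * sqnorm N z <= eta' * eta' * (K0 * K0)) by (apply Rmult_le_compat_l; nra).
  assert ((eta' * K0) * (eta' * K0) <= (eps / 3) * (eps / 3)) by (apply Rmult_le_compat; nra).
  replace (eta' * eta' * (K0 * K0)) with ((eta' * K0) * (eta' * K0)) in * by ring. lra. }
unfold sqnorm in *. unfold Rsqr in *. unfold eta in *. unfold z in *. assert (0 <= eps * eps) by nra. lra.
Qed.

Lemma sqnorm_scal (N : nat) (l : R) (a : nat -> C) :
  sqnorm N (fun n => (RtoC l * a n)%C) = l * l * sqnorm N a.
Proof.
unfold sqnorm. rewrite -sumR_scal. apply sum_n_m_ext; intros n.
rewrite Cmod_mult Cmod_R Rsqr_mult -Rsqr_abs.
match goal with |- @eq _ ?x ?y => change (@eq R x y) end. unfold Rsqr; ring.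
Qed.

Lemma Mapply_scal (alpha : nat -> C) (N : nat) (l : R) (a : nat -> C) (m : nat) :
  Mapply alpha N (fun n => (RtoC l * a n)%C) m = (RtoC l * Mapply alpha N a m)%C.
Proof.
unfold Mapply. rewrite -sumC_scal. apply sum_n_m_ext; intros; Cring.
Qed.

Lemma K1h (alpha : nat -> C) : Mbounded alpha -> Mcompact alpha ->
  forall eps : R, 0 < eps -> exists delta : R, 0 < delta /\
    forall r : R, 0 < r -> 1 - delta < r -> r < 1 ->
      forall (N : nat) (c : nat -> C),
        sqnorm N (fun m => (RtoC (r ^ Dweight m - 1) * Mapply alpha N c m)%C) <= eps * eps * sqnorm N c.
Proof.
intros Hb Hc eps he.
destruct (K1 alpha Hb Hc eps he) as [delta [hd Hd]].
exists delta; split; auto. intros r hr0 hr1 hr2 N c.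
set s := sqnorm N c. assert (hs : 0 <= s) by apply sqnorm_nonneg.
set X := sqnorm N _.
apply le_epsilon. intros t ht.
set u := s + t / (eps * eps).
assert (hu : 0 < u) by (unfold u; assert (0 < t / (eps * eps)) by (apply Rdiv_lt_0_compat; nra); lra).
set l := / sqrt u.
assert (hsq : 0 < sqrt u) by (apply sqrt_lt_R0; auto).
assert (hl2 : l * l = / u).
{ unfold l. rewrite -Rinv_mult sqrt_sqrt; [reflexivity|lra]. }
assert (H1 := Hd r hr0 hr1 hr2 N (fun n => (RtoC l * c n)%C)).
rewrite sqnorm_scal hl2 in H1.
assert (hs1 : / u * s <= 1).
{ unfold u. apply (Rmult_le_reg_l u); [auto|]. rewrite -Rmult_assoc Rinv_r; [|lra].
  assert (0 <= t / (eps * eps)) by (apply Rlt_le, Rdiv_lt_0_compat; nra). unfold u in *; lra. }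
specialize (H1 hs1).
assert (E : sqnorm N (fun m => (RtoC (r ^ Dweight m - 1) * Mapply alpha N (fun n => (RtoC l * c n)%C) m)%C) = l * l * X).
{ unfold X. rewrite -sqnorm_scal. unfold sqnorm. apply sum_n_m_ext; intros m. rewrite Mapply_scal.
  f_equal. f_equal. Cring. }
rewrite E hl2 in H1.
assert (X <= eps * eps * u).
{ apply (Rmult_le_reg_l (/ u)); [apply Rinv_0_lt_compat; auto|].
  replace (/ u * (eps * eps * u)) with (eps * eps) by (field; lra). auto. }
unfold u in H. replace (eps * eps * (s + t / (eps * eps))) with (eps * eps * s + t) in H by (field; nra).
auto.
Qed.

Lemma diff_ident (r : R) (alpha : nat -> C) (N : nat) (a b : nat -> C) :
  (Mform (Dr r alpha) N a b - Mform alpha N a b)%C =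
  (sum_n_m (fun m => ((RtoC (r ^ Dweight m - 1) * Mapply alpha N (Dr r a) m) * Cconj (b m))%C) 1 N +
   sum_n_m (fun n => ((RtoC (r ^ Dweight n - 1) * Mapply alpha N (fun m => Cconj (b m)) n) * a n)%C) 1 N)%C.
Proof.
set T1 := fun n m => ((RtoC (r ^ Dweight m - 1) * (alpha (n * m)%nat * Dr r a n)) * Cconj (b m))%C.
set T2 := fun n m => ((RtoC (r ^ Dweight n - 1) * (alpha (m * n)%nat * Cconj (b m))) * a n)%C.
assert (E1 : sum_n_m (fun m => ((RtoC (r ^ Dweight m - 1) * Mapply alpha N (Dr r a) m) * Cconj (b m))%C) 1 N
   = sum_n_m (fun n => sum_n_m (fun m => T1 n m) 1 N) 1 N).
{ rewrite sum_swap. apply sum_n_m_ext; intros m. unfold T1, Mapply.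
  rewrite (sum_n_m_mult_r (K:=C_Ring)). change (@mult C_Ring ?x ?y) with (Cmult x y).
  rewrite (sumC_scal). reflexivity. }
assert (E2 : sum_n_m (fun n => ((RtoC (r ^ Dweight n - 1) * Mapply alpha N (fun m => Cconj (b m)) n) * a n)%C) 1 N
   = sum_n_m (fun n => sum_n_m (fun m => T2 n m) 1 N) 1 N).
{ apply sum_n_m_ext; intros n. unfold T2, Mapply.
  rewrite (sum_n_m_mult_r (K:=C_Ring)). change (@mult C_Ring ?x ?y) with (Cmult x y).
  rewrite (sumC_scal). reflexivity. }
rewrite E1 E2 -Mform_minus. unfold Mform.
match goal with |- _ = Cplus ?x ?y => change (Cplus x y) with (@plus C_AbelianMonoid x y) end. rewrite -(sum_n_m_plus (G:=C_AbelianMonoid)). apply sum_n_m_ext_loc; intros n [hn1 _].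
rewrite -(sum_n_m_plus (G:=C_AbelianMonoid)). apply sum_n_m_ext_loc; intros m [hm1 _].
unfold T1, T2, Dr. rewrite (mulnC m n) DwR // pow_add.
change (@plus C_AbelianMonoid ?x ?y) with (Cplus x y).
rewrite !RtoC_minus !RtoC_mult. Cring.
Qed.

Lemma sqrt_bound (X Y e : R) : 0 <= e -> 0 <= Y -> X <= e * e * Y -> sqrt X <= e * sqrt Y.
Proof.
intros he hY H. eapply Rle_trans; [apply sqrt_le_1_alt; apply H|].
rewrite sqrt_mult; [|nra|auto]. rewrite sqrt_square; [lra|auto].
Qed.

Lemma sqnorm_conj (N : nat) (b : nat -> C) : sqnorm N (fun m => Cconj (b m)) = sqnorm N b.
Proof. unfold sqnorm. apply sum_n_m_ext; intros; now rewrite Cmod_conj. Qed.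

Lemma dir1 (alpha : nat -> C) : Mbounded alpha -> Mcompact alpha ->
  forall eps : R, (0 < eps)%R ->
      exists delta : R, (0 < delta)%R /\
        forall r : R, (0 < r)%R -> (1 - delta < r)%R -> (r < 1)%R ->
          Mdiff_norm_le (Dr r alpha) alpha eps.
Proof.
intros Hb Hc eps he.
destruct (K1h alpha Hb Hc (eps / 2) ltac:(lra)) as [delta [hd Hd]].
exists delta; split; auto. intros r hr0 hr1 hr2 N a b.
rewrite diff_ident.
eapply Rle_trans; [apply Cmod_triangle|].
set A := sqnorm N a. set B := sqnorm N b.
assert (hA : 0 <= A) by apply sqnorm_nonneg. assert (hB : 0 <= B) by apply sqnorm_nonneg.
assert (h1 : Cmod (sum_n_m (fun m => ((RtoC (r ^ Dweight m - 1) * Mapply alpha N (Dr r a) m) * Cconj (b m))%C) 1 N)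
  <= (eps / 2) * sqrt A * sqrt B).
{ eapply Rle_trans; [apply CS_C|]. rewrite sqnorm_conj. fold B.
  apply Rmult_le_compat_r; [apply sqrt_pos|]. apply sqrt_bound; [lra|auto|].
  eapply Rle_trans; [apply Hd; auto|]. apply Rmult_le_compat_l; [nra|]. apply sqnorm_Dr; lra. }
assert (h2 : Cmod (sum_n_m (fun n => ((RtoC (r ^ Dweight n - 1) * Mapply alpha N (fun m => Cconj (b m)) n) * a n)%C) 1 N)
  <= (eps / 2) * sqrt B * sqrt A).
{ eapply Rle_trans; [apply CS_C|]. fold A.
  apply Rmult_le_compat_r; [apply sqrt_pos|]. apply sqrt_bound; [lra|auto|].
  eapply Rle_trans; [apply Hd; auto|]. rewrite sqnorm_conj. fold B. lra. }
lra.
Qed.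

Theorem proposition5 (alpha : nat -> C) :
  Mbounded alpha ->
  (Mcompact alpha <->
   (forall eps : R, (0 < eps)%R ->
      exists delta : R, (0 < delta)%R /\
        forall r : R, (0 < r)%R -> (1 - delta < r)%R -> (r < 1)%R ->
          Mdiff_norm_le (Dr r alpha) alpha eps)).
Proof.
intros Hb; split.
- intros Hc; apply dir1; auto.
- apply dir2; auto.
Qed.
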